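(* Let $(r_i)_{i\in\mathbb{N}_0}\subseteq\mathbb{N}$ be a sequence of natural numbers. Then there exist a sequence $(c_i)_{i\in\mathbb{N}_0}\subseteq(0,\infty)$ and a sequence $(k_i)_{i\in\mathbb{N}_0}\subseteq\mathbb{N}$ such that $T=\sum_{i\in\mathbb{N}_0}p_i\cdot\partial_x^i$ with $p_{2i}(x)=c_i+x^{2k_ir_i}$ and $p_{2i+1}(x)=0$ for all $i\in\mathbb{N}_0$ is a positivity preserver on $\mathbb{R}[x]$.
   Context: A linear map $T:\mathbb{R}[x]\to\mathbb{R}[x]$ is a positivity preserver if it maps every polynomial that is non-negative on $\mathbb{R}$ to a polynomial that is non-negative on $\mathbb{R}$. The operator $\sum_i p_i\partial_x^i$ acts on each polynomial as a finite sum. *)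

(* Defs.v *)
From HB Require Import structures.
From mathcomp Require Import all_boot all_order all_algebra.
From mathcomp Require Import reals.
Set Implicit Arguments. Unset Strict Implicit. Unset Printing Implicit Defensive.
Import Order.TTheory GRing.Theory Num.Theory.
Local Open Scope ring_scope.

Definition nonneg_on_R (R : realType) (f : {poly R}) : Prop :=
  forall x : R, 0 <= f.[x].

Definition positivity_preserver (R : realType) (T : {poly R} -> {poly R}) : Prop :=
  forall f : {poly R}, nonneg_on_R f -> nonneg_on_R (T f).

(* The operator sum_i p_i * d^i, acting on f as the finite sum over i < size f
   (higher derivatives of f vanish). *)
Definition diff_op (R : realType) (p : nat -> {poly R}) (f : {poly R}) : {poly R} :=
  \sum_(i < size f) p i * f^`(i).

(* Main.v *)
Require Import Defs.
From HB Require Import structures.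
From mathcomp Require Import all_boot all_order all_algebra.
From mathcomp Require Import reals.
From mathcomp Require Import polyrcf.
From mathcomp Require Import topology normedtype derive.
From mathcomp Require Import ring lra zify.
Import Order.TTheory GRing.Theory Num.Theory.
Import numFieldNormedType.Exports.
Local Open Scope ring_scope.

Section SOS.
Variable R : realType.
Implicit Types f g p q : {poly R}.

Lemma nonneg_lead f : nonneg_on_R f -> f != 0 -> 0 < lead_coef f.
Proof.
move=> nf fN0.
have [s1|s2] := leqP (size f) 1.
  have e := size1_polyC s1; move: e fN0 nf; set c := f`_0 => e fN0 nf.
  rewrite e lead_coefC lt_neqAle.
  have -> : 0 <= c by move: (nf 0); rewrite e hornerC.
  rewrite andbT; apply: contra fN0 => /eqP h; by rewrite e -h.
rewrite lt_neqAle eq_sym lead_coef_eq0 fN0 /= leNgt; apply/negP => lt0.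
have l1 : 0 < lead_coef (- f) by rewrite lead_coefN oppr_gt0.
have l2 : (1 < size (- f))%N by rewrite size_polyN.
have [n hn] := @poly_lim_infty R (- f) 1 l1 l2.
have := hn n (lexx n); rewrite hornerN; have := nf n; lra.
Qed.

Lemma glob_min f : nonneg_on_R f -> (1 < size f)%N ->
  exists x0, forall x, f.[x0] <= f.[x].
Proof.
move=> nf sf.
have fN0 : f != 0 by rewrite -size_poly_gt0 (ltn_trans _ sf).
have [n1 h1] := @poly_lim_infty R f f.[0] (nonneg_lead f nf fN0) sf.
pose g := f \Po (- 'X).
have sg : size g = size f by rewrite size_comp_poly2 // size_polyN size_polyX.
have ng : nonneg_on_R g by move=> y; rewrite horner_comp.
have gN0 : g != 0 by rewrite -size_poly_gt0 sg (ltn_trans _ sf).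
have sg1 : (1 < size g)%N by rewrite sg.
have [n2 h2] := @poly_lim_infty R g f.[0] (nonneg_lead g ng gN0) sg1.
pose B := `|n1| + `|n2|.
have B0 : 0 <= B by rewrite addr_ge0.
have Bn1 : n1 <= B by have := ler_norm n1; have := normr_ge0 n2; rewrite /B; lra.
have Bn2 : n2 <= B by have := ler_norm n2; have := normr_ge0 n1; rewrite /B; lra.
have mB : - B <= B by lra.
have [c cin cmin] : exists2 c, c \in `[- B, B] & forall t, t \in `[- B, B] -> f.[c] <= f.[t].
  apply: EVT_min => //; apply: continuous_subspaceT => x; exact: continuous_horner.
have c0 : f.[c] <= f.[0] by apply: cmin; rewrite in_itv /=; apply/andP; split; lra.
exists c => x.
have [xB|xB] := lerP x B; last first.
  apply: (le_trans c0); apply: h1; lra.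
have [xB'|xB'] := lerP (- B) x.
  by apply: cmin; rewrite in_itv /= xB xB'.
apply: (le_trans c0).
have := h2 (- x); rewrite horner_comp hornerN hornerX opprK; apply; lra.
Qed.

Lemma cont_neg p x0 : p.[x0] < 0 ->
  exists2 d, 0 < d & forall y, `|y - x0| < d -> p.[y] < 0.
Proof.
move=> hp.
have hp' : 0 < - p.[x0] by rewrite oppr_gt0.
have [d d0 hd] := @poly_cont R x0 p (- p.[x0]) hp'.
exists d => // y /hd.
move=> h; have := ler_norm (p.[y] - p.[x0]); lra.
Qed.

Lemma double_root F x0 : nonneg_on_R F -> F.[x0] = 0 ->
  exists g, F = ('X - x0%:P) ^+ 2 * g /\ nonneg_on_R g.
Proof.
move=> nF F0.
have /factor_theorem [q eq] : root F x0 by apply/eqP.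
have Fq : forall y, F.[y] = q.[y] * (y - x0) by move=> y; rewrite eq hornerM hornerXsubC.
have q0 : q.[x0] = 0.
  have [qlt|qgt|//] := ltgtP q.[x0] 0.
  + have [d d0 hd] := cont_neg _ _ qlt.
    have h1 : `|(x0 + d / 2) - x0| < d.
      rewrite addrAC subrr add0r ger0_norm; lra.
    have := hd _ h1; have := nF (x0 + d / 2); rewrite Fq.
    have : 0 < x0 + d / 2 - x0 by lra.
    nra.
  + have qlt : (- q).[x0] < 0 by rewrite hornerN oppr_lt0.
    have [d d0 hd] := cont_neg _ _ qlt.
    have h1 : `|(x0 - d / 2) - x0| < d.
      rewrite addrAC subrr add0r normrN ger0_norm; lra.
    have := hd _ h1; have := nF (x0 - d / 2); rewrite Fq hornerN.
    have : x0 - d / 2 - x0 < 0 by lra.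
    nra.
have /factor_theorem [g eqg] : root q x0 by apply/eqP.
exists g; split; first by rewrite eq eqg -mulrA -expr2 mulrC.
have gy : forall y, y != x0 -> 0 <= g.[y].
  move=> y yx; have := nF y; rewrite Fq eqg hornerM hornerXsubC.
  have : 0 < (y - x0) ^+ 2 by rewrite exprn_even_gt0 //= subr_eq0.
  rewrite expr2; nra.
move=> y; have [->|yx] := eqVneq y x0; last exact: gy.
rewrite leNgt; apply/negP => glt.
have [d d0 hd] := cont_neg _ _ glt.
have h1 : `|(x0 + d / 2) - x0| < d.
  rewrite addrAC subrr add0r ger0_norm; lra.
have h2 : x0 + d / 2 != x0.
  rewrite -subr_eq0 addrAC subrr add0r; apply/eqP; lra.
have := hd _ h1; have := gy _ h2; lra.
Qed.

Lemma sos n f : (size f <= n)%N -> nonneg_on_R f ->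
  exists s : seq {poly R}, f = \sum_(h <- s) h ^+ 2.
Proof.
elim: n f => [|n IH] f sf nf.
  exists [::]; rewrite big_nil; apply/eqP; by rewrite -size_poly_eq0 -leqn0.
have [s1|s2] := leqP (size f) 1.
  have e := size1_polyC s1; move: e nf; set c := f`_0 => e nf.
  exists [:: (Num.sqrt c)%:P]; rewrite big_seq1 expr2 -polyCM -expr2 sqr_sqrtr //.
  by move: (nf 0); rewrite e hornerC.
have [x0 hx0] := glob_min f nf s2.
pose F := f - (f.[x0])%:P.
have nF : nonneg_on_R F by move=> y; rewrite /F hornerD hornerN hornerC subr_ge0.
have F0 : F.[x0] = 0 by rewrite /F hornerD hornerN hornerC subrr.
have [g [eF ng]] := double_root F x0 nF F0.
have sg : (size g <= n)%N.
  have [->|gN0] := eqVneq g 0; first by rewrite size_poly0.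
  have sF : (size F <= size f)%N.
    rewrite /F (leq_trans (size_polyD _ _)) // size_polyN geq_max leqnn.
    by rewrite (leq_trans (size_polyC_leq1 _)) // ltnW.
  move: sF; rewrite eF size_mul ?expf_neq0 ?polyXsubC_eq0 // size_exp_XsubC.
  move: sf; case: (size g) => // k; rewrite !addSn /=; lia.
have [s es] := IH g sg ng.
exists ((Num.sqrt f.[x0])%:P :: map (fun h => ('X - x0%:P) * h) s).
rewrite big_cons big_map expr2 -polyCM -expr2 sqr_sqrtr; last by have := nf x0.
have -> : \sum_(j <- s) (('X - x0%:P) * j) ^+ 2 = F.
  by rewrite eF es mulr_sumr; apply: eq_bigr => h _; rewrite exprMn.
by rewrite /F addrC subrK.
Qed.

End SOS.

Section QF.
Variable R : realType.

Lemma pair_ineq (P Q S X Y : R) : 0 <= P -> 0 <= Q -> S ^+ 2 <= 4 * P * Q ->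
  0 <= P * X ^+ 2 + Q * Y ^+ 2 + S * (X * Y).
Proof.
move=> P0 Q0 h.
have key : 4 * P * (P * X ^+ 2 + Q * Y ^+ 2 + S * (X * Y)) =
   (2 * P * X + S * Y) ^+ 2 + (4 * P * Q - S ^+ 2) * Y ^+ 2 by ring.
have [Pz|Pp] := eqVneq P 0.
  have S0 : S = 0.
    apply/eqP; rewrite -sqrf_eq0 eq_le sqr_ge0 andbT; move: h; by rewrite Pz mulr0 mul0r.
  rewrite S0 Pz !mul0r !add0r addr0; exact: mulr_ge0 (sqr_ge0 _).
have Pgt : 0 < P by rewrite lt_def Pp P0.
have : 0 <= 4 * P * (P * X ^+ 2 + Q * Y ^+ 2 + S * (X * Y)).
  rewrite key addr_ge0 ?sqr_ge0 // mulr_ge0 ?sqr_ge0 // subr_ge0 //.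
rewrite pmulr_rge0 // mulr_gt0 //.
Qed.

Lemma sum_alpha M : \sum_(l < M) (2%:R ^+ (l + 2))^-1 = 2^-1 - (2%:R ^+ (M + 1))^-1 :> R.
Proof.
elim: M => [|M IH]; first by rewrite big_ord0 expr1 subrr.
rewrite big_ord_recr /= IH.
have -> : (M.+1 + 1 = (M + 1).+1)%N by lia.
have -> : (M + 2 = (M + 1).+1)%N by lia.
rewrite exprS; set t := 2%:R ^+ (M + 1).
have : 0 < t by rewrite exprn_gt0.
move=> t0; field; rewrite gt_eqF //.
Qed.

Lemma qf (s b : nat -> R) M :
  (forall j, 0 <= s (j + j)%N) ->
  (forall j l, j != l ->
     2%:R ^+ (j + 2) * 2%:R ^+ (l + 2) * s (j + l)%N ^+ 2 <= 4 * (s (j + j)%N * s (l + l)%N)) ->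
  0 <= \sum_(j < M) \sum_(l < M) s (j + l)%N * (b j * b l).
Proof.
move=> s0 cond.
pose al (l : nat) : R := (2%:R ^+ (l + 2))^-1.
have al0 l : 0 < al l by rewrite invr_gt0 exprn_gt0.
pose A (j : nat) := s (j + j)%N * b j ^+ 2.
have A0 j : 0 <= A j by rewrite mulr_ge0 ?sqr_ge0.
have term : forall j l : 'I_M, (if j == l then A j else 0) - al l * A j - al j * A l
   <= s (j + l)%N * (b j * b l).
  move=> j l; have [<-|jl] := eqVneq j l.
    rewrite /A expr2; have := al0 j; have := A0 j; rewrite /A expr2; nra.
  have pi : 0 <= (al l * s (j + j)%N) * b j ^+ 2 + (al j * s (l + l)%N) * b l ^+ 2
      + s (j + l)%N * (b j * b l).
    apply: pair_ineq; [exact: mulr_ge0 (ltW (al0 l)) (s0 j)|exact: mulr_ge0 (ltW (al0 j)) (s0 l)|].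
    have jl' : (j : nat) != l by [].
    have := cond j l jl'.
    rewrite /al; set u := 2%:R ^+ (l + 2); set v := 2%:R ^+ (j + 2).
    have u0 : 0 < u by rewrite exprn_gt0.
    have v0 : 0 < v by rewrite exprn_gt0.
    move=> h.
    have -> : 4 * (u^-1 * s (j + j)%N) * (v^-1 * s (l + l)%N) = (4 * (s (j + j)%N * s (l + l)%N)) / (v * u).
      by field; rewrite !gt_eqF.
    rewrite ler_pdivlMr; [by rewrite mulrC | exact: mulr_gt0].
  rewrite /A.
  have e1 : al l * s (j + j)%N * b j ^+ 2 = al l * (s (j + j)%N * b j ^+ 2) by rewrite mulrA.
  have e2 : al j * s (l + l)%N * b l ^+ 2 = al j * (s (l + l)%N * b l ^+ 2) by rewrite mulrA.
  lra.
pose sg := \sum_(l < M) al l.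
pose SA := \sum_(l < M) A l.
have inner : forall j : 'I_M, \sum_(l < M) ((if j == l then A j else 0) - al l * A j - al j * A l)
   = A j - sg * A j - al j * SA.
  move=> j; rewrite !sumrB -mulr_suml -mulr_sumr; congr (_ - _ - _).
  rewrite (bigD1 j) //= eqxx big1 ?addr0 // => i /negbTE; by rewrite eq_sym => ->.
apply: le_trans (ler_sum _ (fun j _ => ler_sum _ (fun l _ => term j l))).
rewrite (eq_bigr _ (fun j _ => inner j)) !sumrB -mulr_suml -mulr_sumr -/SA -/sg.
have sg_le : sg <= 2^-1.
  rewrite /sg /al sum_alpha; have : 0 < (2%:R ^+ (M + 1))^-1 :> R by rewrite invr_gt0 exprn_gt0.
  lra.
have SA0 : 0 <= SA by apply: sumr_ge0 => i _.
have -> : SA - sg * SA - sg * SA = SA * (1 - 2 * sg) by ring.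
apply: mulr_ge0 => //; lra.
Qed.


Section Lam.
Variable x : R.
Let Y : {poly R} := 'X + x%:P.

Lemma sizeY : size Y = 2%N. Proof. exact: size_XaddC. Qed.

Lemma comp_derivn (f : {poly R}) i : (f \Po Y)^`(i) = f^`(i) \Po Y.
Proof.
elim: i => [|i IH]; first by rewrite !derivn0.
by rewrite !derivnS IH deriv_comp /Y derivD derivX derivC addr0 mulr1.
Qed.

Lemma taylor_coef (f : {poly R}) i : (f^`(i)).[x] = (f \Po Y)`_i * i`!%:R.
Proof.
have -> : x = Y.[0] by rewrite /Y hornerD hornerX hornerC add0r.
rewrite -horner_comp -comp_derivn horner_coef0 coef_derivn addn0 ffactnn.
by rewrite mulr_natr.
Qed.

Variable S : nat -> R.
Definition Lam N (q : {poly R}) := \sum_(i < N) S i * (q \Po Y)`_i.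

Lemma Lam_sum N (I : Type) (r : seq I) (F : I -> {poly R}) :
  Lam N (\sum_(h <- r) F h) = \sum_(h <- r) Lam N (F h).
Proof.
elim: r => [|h r IH].
  rewrite !big_nil /Lam comp_poly0; apply: big1 => i _; by rewrite coef0 mulr0.
rewrite !big_cons -IH /Lam -big_split /=; apply: eq_bigr => i _.
by rewrite comp_polyD coefD mulrDr.
Qed.

Lemma Lam_ext N N' (q : {poly R}) : (size q <= N)%N -> (N <= N')%N -> Lam N q = Lam N' q.
Proof.
move=> sq NN; rewrite /Lam (big_ord_widen N' (fun i => S i * (q \Po Y)`_i) NN).
rewrite big_mkcond /=; apply: eq_bigr => i _; case: ifP => // hi.
rewrite nth_default ?mulr0 // size_comp_poly2 ?sizeY //.
by rewrite (leq_trans sq) // leqNgt hi.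
Qed.

Lemma sum_delta N k (F : nat -> R) : (k < N)%N ->
  \sum_(i < N) F i * (nat_of_ord i == k)%:R = F k.
Proof.
move=> kN; rewrite (bigD1 (Ordinal kN)) //= eqxx mulr1 big1 ?addr0 // => i.
move=> ik; have -> : (nat_of_ord i == k) = false.
  by apply/negbTE; apply: contra ik => /eqP e; apply/eqP/val_inj.
by rewrite mulr0.
Qed.

Lemma Lam_sq N (h : {poly R}) : (2 * size (h \Po Y) <= N)%N ->
  Lam N (h ^+ 2) = \sum_(j < size (h \Po Y)) \sum_(l < size (h \Po Y))
      S (j + l)%N * ((h \Po Y)`_j * (h \Po Y)`_l).
Proof.
set g := h \Po Y; set M := size g => MN.
have eg : g = \sum_(j < M) g`_j *: 'X^j by rewrite -poly_def coefK.
have gg : g * g = \sum_(j < M) \sum_(l < M) (g`_j * g`_l) *: 'X^(j + l).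
  rewrite {1}eg mulr_suml; apply: eq_bigr => j _; rewrite [X in _ * X = _]eg mulr_sumr.
  apply: eq_bigr => l _; by rewrite -scalerAl -scalerAr scalerA -exprD.
rewrite /Lam expr2 comp_polyM -/g gg.
under eq_bigr => i _ do rewrite coef_sum mulr_sumr.
rewrite exchange_big /=; apply: eq_bigr => j _.
under eq_bigr => i _ do rewrite coef_sum mulr_sumr.
rewrite exchange_big /=; apply: eq_bigr => l _.
under eq_bigr => i _ do rewrite coefZ coefXn mulrA.
apply: (@sum_delta N (j + l)%N (fun i => S i * (g`_j * g`_l))); move: (ltn_ord j) (ltn_ord l) MN; lia.
Qed.

End Lam.
End QF.

Fixpoint mk (r : nat -> nat) (n : nat) : nat :=
  if n is n'.+1 then (r n'.+1 * (2 * mk r n' + 1))%N else r 0%N.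
Definition kk (r : nat -> nat) (n : nat) : nat :=
  if n is n'.+1 then (2 * mk r n' + 1)%N else 1%N.

Lemma mkE r n : mk r n = (kk r n * r n)%N.
Proof. by case: n => [|n] /=; rewrite ?mul1n // mulnC. Qed.

Section Consts.
Variable R : realType.
Variable r : nat -> nat.
Hypothesis hr : forall i, (0 < r i)%N.

Definition DD (n : nat) : R := (2 ^ (n + n + 4) * (n + n)`!)%:R.

Fixpoint cc (n : nat) : R :=
  if n is n'.+1 then DD n' ^+ (2 * mk r n' + 1) + DD n' * cc n' ^+ 2 else 1.

Lemma mk_step n : (2 * mk r n + 1 <= mk r n.+1)%N.
Proof. rewrite /=; have := hr n.+1; case: (r n.+1) => // k _; rewrite mulSn; lia. Qed.

Lemma mk_mono n l : (n <= l)%N -> (mk r n <= mk r l)%N.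
Proof.
elim: l => [|l IH]; first by rewrite leqn0 => /eqP ->.
rewrite leq_eqVlt => /orP[/eqP -> //|/IH h]; have := mk_step l; lia.
Qed.

Lemma mk_gt n l : (n < l)%N -> (2 * mk r n + 1 <= mk r l)%N.
Proof. move=> nl; have := mk_step n; have := @mk_mono n.+1 l nl; lia. Qed.

Lemma DD_ge1 n : 1 <= DD n.
Proof. by rewrite /DD ler1n muln_gt0 expn_gt0 fact_gt0. Qed.

Lemma DD_mono n l : (n <= l)%N -> DD n <= DD l.
Proof.
move=> nl; rewrite /DD ler_nat leq_mul //.
  by rewrite leq_exp2l //; lia.
by apply: leq_fact; lia.
Qed.

Lemma cc_ge1 n : 1 <= cc n.
Proof.
elim: n => [|n IH] /=; first by [].
have h1 : 0 <= DD n ^+ (2 * mk r n + 1) by rewrite exprn_ge0 // (le_trans ler01 (DD_ge1 n)).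
have h2 : 1 <= DD n * cc n ^+ 2.
  have d1 := DD_ge1 n; rewrite expr2.
  have h3 : 1 <= cc n * cc n by nra.
  nra.
lra.
Qed.

Lemma cc_mono n l : (n <= l)%N -> cc n <= cc l.
Proof.
elim: l => [|l IH]; first by rewrite leqn0 => /eqP ->.
rewrite leq_eqVlt => /orP[/eqP -> //|/IH h]; apply: (le_trans h) => /=.
have h1 : 0 <= DD l ^+ (2 * mk r l + 1) by rewrite exprn_ge0 // (le_trans ler01 (DD_ge1 l)).
have h2 : cc l <= DD l * cc l ^+ 2.
  have c1 := cc_ge1 l; have d1 := DD_ge1 l.
  rewrite expr2; nra.
lra.
Qed.

Lemma cc_big n l : (n < l)%N ->
  DD n * cc n ^+ 2 <= cc l /\ DD n ^+ (2 * mk r n + 1) <= cc l.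
Proof.
case: l => // l; rewrite ltnS => nl /=.
have d1 := DD_ge1 n; have dm := @DD_mono n l nl.
have h1 : 0 <= DD l ^+ (2 * mk r l + 1) by rewrite exprn_ge0 // (le_trans ler01 (DD_ge1 l)).
have h2 : 0 <= DD l * cc l ^+ 2 by rewrite mulr_ge0 ?sqr_ge0 // (le_trans ler01 (DD_ge1 l)).
split.
  have : DD n * cc n ^+ 2 <= DD l * cc l ^+ 2.
    apply: ler_pM; [lra | exact: sqr_ge0 | exact: dm |].
    apply: lerXn2r; rewrite ?nnegrE ?(le_trans ler01 (cc_ge1 _)) //; exact: cc_mono.
  lra.
have : DD n ^+ (2 * mk r n + 1) <= DD l ^+ (2 * mk r l + 1).
  apply: (@le_trans _ _ (DD n ^+ (2 * mk r l + 1))).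
    by apply: ler_weXn2l => //; have := @mk_mono n l nl; lia.
  apply: lerXn2r => //; rewrite nnegrE; lra.
lra.
Qed.

Lemma key n j l (u : R) : 0 <= u -> (n < l)%N ->
  DD n * (cc n + u ^+ mk r n) ^+ 2 <= 4 * ((cc j + u ^+ mk r j) * (cc l + u ^+ mk r l)).
Proof.
move=> u0 nl.
have [b1 b2] := @cc_big n l nl.
have d1 := DD_ge1 n.
set c := cc n; set v := u ^+ mk r n; set D := DD n.
set al := cc l + u ^+ mk r l.
have aj : 1 <= cc j + u ^+ mk r j.
  have := cc_ge1 j; have := exprn_ge0 (mk r j) u0; lra.
have al0 : 0 <= al.
  have := cc_ge1 l; have := exprn_ge0 (mk r l) u0; rewrite /al; lra.
have h1 : al <= (cc j + u ^+ mk r j) * al by nra.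
have sq : D * (c + v) ^+ 2 <= D * (2 * c ^+ 2) + D * (2 * v ^+ 2).
  rewrite -mulrDr; apply: ler_wpM2l; first lra.
  have : 0 <= (c - v) ^+ 2 by apply: sqr_ge0.
  rewrite !expr2; lra.
have v2 : v ^+ 2 = u ^+ (2 * mk r n) by rewrite /v -exprM mulnC.
have main : D * v ^+ 2 <= D ^+ (2 * mk r n + 1) + 2 * u ^+ mk r l.
  have ul : 0 <= u ^+ mk r l by apply: exprn_ge0.
  rewrite v2 addn1 exprS.
  have [uD|Du] := lerP u D.
    have : u ^+ (2 * mk r n) <= D ^+ (2 * mk r n).
      by apply: lerXn2r; rewrite ?nnegrE //; lra.
    move=> h; have : D * u ^+ (2 * mk r n) <= D * D ^+ (2 * mk r n).
      by apply: ler_wpM2l => //; lra.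
    lra.
  have u1 : 1 <= u by lra.
  have : u ^+ (2 * mk r n).+1 <= u ^+ mk r l.
    by apply: ler_weXn2l => //; have := @mk_gt n l nl; lia.
  rewrite exprS => h.
  have : D * u ^+ (2 * mk r n) <= u * u ^+ (2 * mk r n).
    by apply: ler_wpM2r; [apply: exprn_ge0| lra].
  have := exprn_ge0 (2 * mk r n) u0.
  have : 0 <= D * D ^+ (2 * mk r n) by apply: mulr_ge0; [lra | apply: exprn_ge0; lra].
  lra.
have e1 : D * (2 * c ^+ 2) = 2 * (D * c ^+ 2) by ring.
have e2 : D * (2 * v ^+ 2) = 2 * (D * v ^+ 2) by ring.
rewrite /al in h1 al0 *.
rewrite -/c -/D in b1 b2.
lra.
Qed.

End Consts.
Arguments cc {R} r n.
Arguments DD {R} n.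
Arguments cc_ge1 {R} r n.
Arguments key {R} r hr n j l u.

Section Main.
Variable R : realType.
Variable r : nat -> nat.
Hypothesis hr : forall i, (0 < r i)%N.
Variable p : nat -> {poly R}.
Hypothesis hp : forall i, p (2 * i)%N = (cc r i)%:P + 'X^(2 * kk r i * r i).
Hypothesis hodd : forall i, p (2 * i + 1)%N = 0.
Variable x : R.

Definition S (i : nat) : R := (p i).[x] * i`!%:R.

Lemma S_even i : S (i + i) = (i + i)`!%:R * (cc r i + (x ^+ 2) ^+ mk r i).
Proof.
rewrite /S mulrC; congr (_ * _).
have -> : (i + i = 2 * i)%N by lia.
by rewrite hp hornerD hornerC hornerXn mkE -exprM mulnA.
Qed.

Lemma S_odd i : S (2 * i + 1) = 0.
Proof. by rewrite /S hodd horner0 mul0r. Qed.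

Lemma S_ge0 i : 0 <= S (i + i).
Proof.
rewrite S_even mulr_ge0 // addr_ge0 //.
  exact: le_trans ler01 (cc_ge1 r i).
by rewrite exprn_ge0 // sqr_ge0.
Qed.

Lemma S_cond j l : j != l ->
  2%:R ^+ (j + 2) * 2%:R ^+ (l + 2) * S (j + l)%N ^+ 2 <= 4 * (S (j + j)%N * S (l + l)%N).
Proof.
wlog: j l / (j < l)%N => [hw ne|jl _].
  have [h|h|h] := ltngtP j l.
  - exact: hw h ne.
  - have := hw l j h; rewrite eq_sym => /(_ ne).
    by rewrite (addnC l j) (mulrC (2%:R ^+ (l + 2))) (mulrC (S (l + l)%N)).
  - by rewrite h eqxx in ne.
have S0 := S_ge0.
have R0 : 0 <= 4 * (S (j + j)%N * S (l + l)%N) by rewrite mulr_ge0 // mulr_ge0 // S_ge0.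
set h := (j + l)./2.
have [od|ev] := boolP (odd (j + l)).
  have e : (j + l = 2 * h + 1)%N.
    have := odd_double_half (j + l); rewrite od -/h -mul2n; lia.
  by rewrite e S_odd expr0n /= mulr0.
have e : (j + l = h + h)%N.
  have := odd_double_half (j + l); rewrite (negbTE ev) -/h -mul2n; lia.
have jh : (j < h)%N by lia.
have hl : (h < l)%N by lia.
set u := x ^+ 2.
have u0 : 0 <= u by apply: sqr_ge0.
have K := key r hr h j l u u0 hl.
rewrite e S_even !S_even.
set F := (h + h)`!%:R : R.
have F1 : 1 <= F by rewrite ler1n fact_gt0.
have -> : 2%:R ^+ (j + 2) * 2%:R ^+ (l + 2) = 2%:R ^+ (h + h + 4) :> R.
  by rewrite -exprD; congr (_ ^+ _); lia.
have eD : DD h = 2%:R ^+ (h + h + 4) * F :> R by rewrite /DD natrM natrX.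
set an := cc r h + u ^+ mk r h.
set aj := cc r j + u ^+ mk r j.
set al := cc r l + u ^+ mk r l.
have aj0 : 0 <= aj by rewrite /aj addr_ge0 //; [exact: le_trans ler01 (cc_ge1 r j) | exact: exprn_ge0].
have al0 : 0 <= al by rewrite /al addr_ge0 //; [exact: le_trans ler01 (cc_ge1 r l) | exact: exprn_ge0].
rewrite -/an -/aj -/al in K *.
have Fj : 1 <= (j + j)`!%:R :> R by rewrite ler1n fact_gt0.
have Fl : F <= (l + l)`!%:R :> R by rewrite ler_nat leq_fact //; lia.
have -> : 2%:R ^+ (h + h + 4) * (F * an) ^+ 2 = F * (DD h * an ^+ 2) by rewrite eD; ring.
apply: (@le_trans _ _ (F * (4 * (aj * al)))).
  by apply: ler_wpM2l => //; lra.
have ajal : 0 <= aj * al by apply: mulr_ge0.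
have : F * (aj * al) <= (j + j)`!%:R * (l + l)`!%:R * (aj * al).
  apply: ler_wpM2r => //.
  by have := ler_pM ler01 (le_trans ler01 F1) Fj Fl; rewrite mul1r.
move=> hh.
have -> : (j + j)`!%:R * aj * ((l + l)`!%:R * al) = (j + j)`!%:R * (l + l)`!%:R * (aj * al) by ring.
lra.
Qed.

End Main.

Theorem proposition4p2 (R : realType) (r : nat -> nat) (hr : forall i, (0 < r i)%N) :
  exists (c : nat -> R) (k : nat -> nat),
    (forall i, 0 < c i) /\ (forall i, (0 < k i)%N) /\
    forall p : nat -> {poly R},
      (forall i, p (2 * i)%N = (c i)%:P + 'X^(2 * k i * r i)) ->
      (forall i, p (2 * i + 1)%N = 0) ->
      positivity_preserver (diff_op p).
Proof.
exists (cc r), (kk r).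
split; first by move=> i; exact: lt_le_trans ltr01 (cc_ge1 r i).
split; first by case=> [|n] //=; rewrite addn1.
move=> p hp hodd f nf x.
pose SS := S R p x.
have ev : (diff_op p f).[x] = Lam R x SS (size f) f.
  rewrite /diff_op horner_sum /Lam; apply: eq_bigr => i _.
  by rewrite hornerM taylor_coef /SS /S (mulrC _ (i`!%:R)) mulrA.
rewrite ev.
have [s es] := @sos R (size f) f (leqnn (size f)) nf.

pose N := (size f + \sum_(h <- s) 2 * size h)%N.
have fN : (size f <= N)%N by apply: leq_addr.
rewrite (@Lam_ext R x SS (size f) N f (leqnn (size f)) fN).
have -> : Lam R x SS N f = \sum_(h <- s) Lam R x SS N (h ^+ 2).
  by rewrite {1}es Lam_sum.
rewrite big_seq; apply: sumr_ge0 => h hin.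
have hN : (2 * size (h \Po ('X + x%:P)) <= N)%N.
  rewrite size_comp_poly2 ?size_XaddC // /N (big_rem h hin) /=.
  by rewrite addnCA leq_addr.
rewrite Lam_sq //.
apply: qf.
- move=> j; rewrite /SS; exact: (@S_ge0 R r p hp x j).
- move=> j l; rewrite /SS; exact: (@S_cond R r hr p hp hodd x j l).
Qed.
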